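(* Let $\varphi=\frac{1+\sqrt5}{2}$ and $\theta_0=\left(\frac12,\frac1\varphi,\frac1{\varphi^2}\right)$. There exists a partition $\mathcal P=\bigcup_{1\le i\le 7}P_{a_i}$ of the face $X=0$ of the cube $[0,1]^3$ and a map $\Phi$ from $\{a_1,\dots,a_7\}$ to $\{a,b,c\}^*$, given by $\Phi(a_1)=acb$, $\Phi(a_2)=abc$, $\Phi(a_3)=abcb$, $\Phi(a_4)=abb$, $\Phi(a_5)=abbc$, $\Phi(a_6)=acbb$, $\Phi(a_7)=ab$, such that for every $m\in P_{a_i}$ with well defined orbit, $\Phi(a_i)$ is the first return word of $a$ in $f_{\theta_0}(m)$.
   Context: For $m$ such that the line $m+\mathbb R\theta_0$ contains no point with more than one integer coordinate, $f_{\theta_0}(m)\in\{a,b,c\}^{\mathbb N}$ records, in order, the successive intersections of the half line $m+\mathbb R_+\theta_0$ with the planes $X=n$ (letter $a$), $Y=n$ (letter $b$), $Z=n$ (letter $c$), $n\in\mathbb Z$; for $m$ on the face $X=0$ it begins with $a$. The return words of $a$ in such a word $u$ are the factors of $u$ starting at an occurrence of $a$ and ending just before the next occurrence of $a$; the first return word is the prefix of $u$ preceding the second occurrence of $a$. *)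

(* Defs.v *)
From mathcomp Require Import all_boot all_order all_algebra.
From mathcomp Require Import reals.
Import Order.TTheory GRing.Theory Num.Theory.
Local Open Scope ring_scope.

Set Implicit Arguments.
Unset Strict Implicit.
Unset Printing Implicit Defensive.

(* Letters: La = a (planes X = n), Lb = b (planes Y = n), Lc = c (planes Z = n). *)
Inductive letter := La | Lb | Lc.

Definition is_a (l : letter) : bool := if l is La then true else false.

Definition coord (R : realType) (l : letter) (p : R * R * R) : R :=
  match l with La => p.1.1 | Lb => p.1.2 | Lc => p.2 end.

Definition line_coord (R : realType) (theta m : R * R * R) (l : letter) (s : R) : R :=
  coord l m + s * coord l theta.

Definition crossing (R : realType) (theta m : R * R * R) (l : letter) (s : R) : Prop :=
  0 <= s /\ line_coord theta m l s \is a Num.int.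

Definition well_defined_orbit (R : realType) (theta m : R * R * R) : Prop :=
  forall t : R, ~ (exists l1 l2 : letter, l1 <> l2 /\
      line_coord theta m l1 t \is a Num.int /\ line_coord theta m l2 t \is a Num.int).

(* v is a prefix of f_theta(m): there are times t_0 < ... < t_{|v|-1}, the j-th one
   being a crossing of the plane family of letter v_j, and these are all the
   crossings of the half line with time at most t_{|v|-1}. *)
Definition word_prefix (R : realType) (theta m : R * R * R) (v : seq letter) : Prop :=
  exists ts : seq R,
    [/\ size ts = size v,
        sorted <%R ts,
        (forall j, (j < size v)%N -> crossing theta m (nth La v j) (nth 0 ts j)) &
        (forall (l : letter) (s : R), crossing theta m l s -> s <= last 0 ts ->
           exists j, [/\ (j < size v)%N, s = nth 0 ts j & l = nth La v j])].

(* w is the first return word of a in f_theta(m): w is the prefix of f_theta(m)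
   preceding the second occurrence of a, i.e. w contains exactly one a, and
   w followed by a is a prefix of f_theta(m). *)
Definition first_return_word (R : realType) (theta m : R * R * R) (w : seq letter) : Prop :=
  count is_a w = 1%N /\ word_prefix theta m (rcons w La).

Definition face_X0 (R : realType) (p : R * R * R) : Prop :=
  p.1.1 = 0 /\ 0 <= p.1.2 <= 1 /\ 0 <= p.2 <= 1.

Definition is_partition (R : realType) (I : Type) (S : R * R * R -> Prop)
    (P : I -> R * R * R -> Prop) : Prop :=
  [/\ (forall p, S p <-> exists i, P i p),
      (forall i j p, P i p -> P j p -> i = j) &
      (forall i, exists p, P i p)].

Definition golden (R : realType) : R := (1 + Num.sqrt 5) / 2.

Definition theta0 (R : realType) : R * R * R :=
  (1 / 2, 1 / golden R, 1 / (golden R ^+ 2)).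

(* Phi(a_{i+1}) for i : 'I_7. *)
Definition Phi (i : 'I_7) : seq letter :=
  nth [::] [:: [:: La; Lc; Lb];
              [:: La; Lb; Lc];
              [:: La; Lb; Lc; Lb];
              [:: La; Lb; Lb];
              [:: La; Lb; Lb; Lc];
              [:: La; Lc; Lb; Lb];
              [:: La; Lb] ] i.

(* Main.v *)
Require Import Defs.
From mathcomp Require Import all_boot all_order all_algebra.
From mathcomp Require Import reals.
From mathcomp Require Import ring lra zify.
Import Order.TTheory GRing.Theory Num.Theory.
Local Open Scope ring_scope.

Set Implicit Arguments.
Unset Strict Implicit.
Unset Printing Implicit Defensive.

Lemma int3 (R : realType) (x : R) :
  x \is a Num.int -> -1 < x -> x < 3 -> x = 0 \/ x = 1 \/ x = 2.
Proof.
case/intrP=> n ->.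
have e1 : -1 = (-1 : int)%:~R :> R by rewrite rmorphN1.
have e3 : 3 = (3 : int)%:~R :> R by [].
rewrite e1 e3 !ltr_int => h1 h2.
have : n = 0 \/ n = 1 \/ n = 2 by lia.
by case=> [->|[->|->]]; auto.
Qed.

Lemma ltT (R : realType) (x y : R) : x < y -> (x < y) = true.
Proof. by []. Qed.
Lemma ltF (R : realType) (x y : R) : y <= x -> (x < y) = false.
Proof. by move=> h; apply/negbTE; rewrite -leNgt. Qed.

Definition tb1 (R : realType) (g y : R) := (1 - y) * g.
Definition tb2 (R : realType) (g y : R) := (2 - y) * g.
Definition tc (R : realType) (g z : R) := (1 - z) * (g + 1).
Arguments tb1 : simpl never.
Arguments tb2 : simpl never.
Arguments tc : simpl never.

Definition windex (R : realType) (g y z : R) : nat :=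
  if tb2 g y < 2 then
    (if tc g z < 2 then
       (if tb1 g y < tc g z then (if tc g z < tb2 g y then 2 else 4) else 5)
     else 3)
  else (if tc g z < 2 then (if tb1 g y < tc g z then 1 else 0) else 6).

Lemma windex_lt (R : realType) (g y z : R) : (windex g y z < 7)%N.
Proof. by rewrite /windex; repeat case: ifP. Qed.

Definition Ls : seq (seq letter) :=
  [:: [:: La; Lc; Lb]; [:: La; Lb; Lc]; [:: La; Lb; Lc; Lb]; [:: La; Lb; Lb];
      [:: La; Lb; Lb; Lc]; [:: La; Lc; Lb; Lb]; [:: La; Lb] ].

Ltac decide_lt :=
  repeat match goal with |- context [?x < ?y] =>
    first [rewrite (@ltT _ x y); last lra | rewrite (@ltF _ x y); last lra] end.

Section Main.
Variable R : realType.
Variables g r : R.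
Hypothesis rg : r * g = 1.
Hypothesis gr1 : g = 1 + r.
Hypothesis rb : 3/5 < r < 5/8.

Let gb : 8/5 < g < 13/8.
Proof. move/andP: rb => [h1 h2]; rewrite gr1; apply/andP; split; lra. Qed.

Lemma qh : (1 - r) * (g + 1) = 1.
Proof. have h : r * (1 + r) = 1 by rewrite -gr1. rewrite gr1; lra. Qed.

Let th : R * R * R := (1 / 2, r, 1 - r).

Lemma tb1_w a : tb1 g (1 - r * a) = a.
Proof. by rewrite /tb1 (_ : 1 - (1 - r * a) = r * a) ?(mulrC r) -?mulrA ?rg ?mulr1 //; ring. Qed.
Lemma tb2_w a : tb2 g (1 - r * a) = g + a.
Proof.
rewrite /tb2 (_ : 2 - (1 - r * a) = 1 + a * r); last by ring.
by rewrite mulrDl mul1r -mulrA rg mulr1.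
Qed.
Lemma tc_w c : tc g (1 - (1 - r) * c) = c.
Proof.
rewrite /tc (_ : 1 - (1 - (1 - r) * c) = c * (1 - r)); last by ring.
by rewrite -mulrA qh mulr1.
Qed.

Lemma nonempty (i : nat) : (i < 7)%N ->
  exists y z : R, (0 <= y <= 1) /\ (0 <= z <= 1) /\ windex g y z = i.
Proof.
move/andP: rb => [h1 h2]; move/andP: gb => [h3 h4].
have F : forall a c, 0 <= a -> r * a <= 1 -> 0 <= c -> (1 - r) * c <= 1 ->
   exists2 y, y = 1 - r * a & exists2 z, z = 1 - (1 - r) * c & 
   (0 <= y <= 1) /\ (0 <= z <= 1).
  move=> a c ha hra hc hrc; exists (1 - r * a) => //; exists (1 - (1 - r) * c) => //.
  have : 0 <= r * a by apply: mulr_ge0; lra.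
  have : 0 <= (1 - r) * c by apply: mulr_ge0; lra.
  by move=> *; split; apply/andP; split; lra.
case: i => [|[|[|[|[|[|[|i]]]]]]] // _.
- have [|||| y -> [z -> [hy hz]]] := F (1/2) (1/4); try lra.
  exists (1 - r * (1/2)), (1 - (1 - r) * (1/4)); do 2 split => //.
  by rewrite /windex tb1_w tb2_w tc_w; decide_lt.
- have [|||| y -> [z -> [hy hz]]] := F (1/2) 1; try lra.
  exists (1 - r * (1/2)), (1 - (1 - r) * 1); do 2 split => //.
  by rewrite /windex tb1_w tb2_w tc_w; decide_lt.
- have [|||| y -> [z -> [hy hz]]] := F (1/4) 1; try lra.
  exists (1 - r * (1/4)), (1 - (1 - r) * 1); do 2 split => //.
  by rewrite /windex tb1_w tb2_w tc_w; decide_lt.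
- have [|||| y -> [z -> [hy hz]]] := F (1/4) (5/2); try lra.
  exists (1 - r * (1/4)), (1 - (1 - r) * (5/2)); do 2 split => //.
  by rewrite /windex tb1_w tb2_w tc_w; decide_lt.
- have [|||| y -> [z -> [hy hz]]] := F (1/4) (19/10); try lra.
  exists (1 - r * (1/4)), (1 - (1 - r) * (19/10)); do 2 split => //.
  by rewrite /windex tb1_w tb2_w tc_w; decide_lt.
- have [|||| y -> [z -> [hy hz]]] := F (1/4) (1/8); try lra.
  exists (1 - r * (1/4)), (1 - (1 - r) * (1/8)); do 2 split => //.
  by rewrite /windex tb1_w tb2_w tc_w; decide_lt.
- have [|||| y -> [z -> [hy hz]]] := F (1/2) (5/2); try lra.
  exists (1 - r * (1/2)), (1 - (1 - r) * (5/2)); do 2 split => //.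
  by rewrite /windex tb1_w tb2_w tc_w; decide_lt.
Qed.


Section Orbit.
Variables y z : R.
Hypothesis wd : well_defined_orbit th ((0, y), z).
Hypothesis hy : 0 <= y <= 1.
Hypothesis hz : 0 <= z <= 1.
Let m : R * R * R := ((0, y), z).

Lemma cross_ne l1 l2 s : l1 <> l2 -> crossing th m l1 s -> crossing th m l2 s -> False.
Proof. move=> ne [_ h1] [_ h2]; case: (@wd s); exists l1, l2; split => //. Qed.

Lemma cA0 : crossing th m La 0.
Proof. split => //; rewrite /line_coord /= mul0r addr0; exact: rpred0. Qed.

Lemma cA2 : crossing th m La 2.
Proof.
split; first by lra.
rewrite /line_coord /= (_ : 0 + 2 * (1 / 2) = 1 :> R); first exact: rpred1.
by lra.
Qed.

Lemma y01 : 0 < y < 1.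
Proof.
have ny : y \is a Num.int -> False.
  move=> H; apply: (@cross_ne La Lb 0) => //; first exact: cA0.
  by split => //; rewrite /line_coord /= mul0r addr0.
move/andP: hy => [h1 h2].
apply/andP; split; rewrite lt_neqAle ?h1 ?h2 andbT; apply/negP => /eqP e; apply: ny.
  by rewrite -e rpred0.
by rewrite e rpred1.
Qed.

Lemma z01 : 0 < z < 1.
Proof.
have ny : z \is a Num.int -> False.
  move=> H; apply: (@cross_ne La Lc 0) => //; first exact: cA0.
  by split => //; rewrite /line_coord /= mul0r addr0.
move/andP: hz => [h1 h2].
apply/andP; split; rewrite lt_neqAle ?h1 ?h2 andbT; apply/negP => /eqP e; apply: ny.
  by rewrite -e rpred0.
by rewrite e rpred1.
Qed.

Lemma cB1 : crossing th m Lb (tb1 g y).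
Proof.
move/andP: y01 => [h1 h2]; move/andP: gb => [h3 h4].
split; first by rewrite /tb1; apply: mulr_ge0; lra.
by rewrite /line_coord /= /tb1 -mulrA (mulrC g r) rg mulr1 addrC subrK rpred1.
Qed.

Lemma cB2 : crossing th m Lb (tb2 g y).
Proof.
move/andP: y01 => [h1 h2]; move/andP: gb => [h3 h4].
split; first by rewrite /tb2; apply: mulr_ge0; lra.
by rewrite /line_coord /= /tb2 -mulrA (mulrC g r) rg mulr1 addrC subrK rpred_nat.
Qed.

Lemma cC : crossing th m Lc (tc g z).
Proof.
move/andP: z01 => [h1 h2]; move/andP: gb => [h3 h4].
split; first by rewrite /tc; apply: mulr_ge0; lra.
by rewrite /line_coord /= /tc -mulrA (mulrC (g + 1)) qh mulr1 addrC subrK rpred1.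
Qed.

Lemma tfacts : [/\ 0 < tb1 g y, tb1 g y < tb2 g y, tb1 g y < 2 & 0 < tc g z].
Proof.
move/andP: y01 => [h1 h2]; move/andP: z01 => [h5 h6]; move/andP: gb => [h3 h4].
rewrite /tb1 /tb2 /tc; split; try nra.
Qed.

Lemma char l s : crossing th m l s -> s <= 2 ->
  (l = La /\ s = 0) \/ (l = La /\ s = 2) \/ (l = Lb /\ s = tb1 g y) \/
  (l = Lb /\ s = tb2 g y /\ tb2 g y < 2) \/ (l = Lc /\ s = tc g z /\ tc g z < 2).
Proof.
move=> Hc s2; have [s0 Hi] := Hc.
move/andP: y01 => [h1 h2]; move/andP: z01 => [h5 h6].
move/andP: rb => [h3 h4].
have ne2 : forall l', l' <> La -> crossing th m l' s -> s < 2.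
  move=> l' nl' Hc'; rewrite lt_neqAle s2 andbT; apply/negP => /eqP e.
  have HA : crossing th m La s by rewrite e; exact: cA2.
  by apply: (@cross_ne La l' s _ HA Hc') => E; apply: nl'.
case: l Hc Hi => Hc; rewrite /line_coord /= => Hi.
- have [e|[e|e]] := int3 Hi ltac:(lra) ltac:(lra).
  + by left; split => //; lra.
  + by right; left; split => //; lra.
  + by exfalso; lra.
- have sr : s * r <= 2 * r by rewrite ler_wpM2r //; lra.
  have sr0 : 0 <= s * r by apply: mulr_ge0; lra.
  have [e|[e|e]] := int3 Hi ltac:(lra) ltac:(lra).
  + by exfalso; lra.
  + right; right; left; split => //.
    rewrite /tb1; transitivity (s * (r * g)); first by rewrite rg mulr1.
    rewrite mulrA (_ : s * r = 1 - y) //; lra.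
  + right; right; right; left; split => //.
    have es : s = tb2 g y.
      rewrite /tb2; transitivity (s * (r * g)); first by rewrite rg mulr1.
      rewrite mulrA (_ : s * r = 2 - y) //; lra.
    by split => //; rewrite -es; apply: (ne2 Lb).
- have sr : s * (1 - r) <= 2 * (1 - r) by rewrite ler_wpM2r //; lra.
  have sr0 : 0 <= s * (1 - r) by apply: mulr_ge0; lra.
  have [e|[e|e]] := int3 Hi ltac:(lra) ltac:(lra).
  + by exfalso; lra.
  + right; right; right; right; split => //.
    have es : s = tc g z.
      rewrite /tc; transitivity (s * ((1 - r) * (g + 1))); first by rewrite qh mulr1.
      rewrite mulrA (_ : s * (1 - r) = 1 - z) //; lra.
    by split => //; rewrite -es; apply: (ne2 Lc).
  + by exfalso; lra.
Qed.


Lemma ltFE (a b : R) : (a < b) = false -> b <= a.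
Proof. by move/negbT; rewrite -leNgt. Qed.

Ltac solve_wp ts :=
  exists ts; split;
  [ by []
  | rewrite /= ?andbT; repeat (apply/andP; split); lra
  | move=> [|[|[|[|[|j]]]]] //= _;
    first [exact: cA0 | exact: cA2 | exact: cB1 | exact: cB2 | exact: cC]
  | intros l s Hc Hs; simpl in Hs;
    destruct (char Hc Hs) as [[-> ->]|[[-> ->]|[[-> ->]|[[-> [-> H]]|[-> [-> H]]]]]];
    first [by exists 0%N | by exists 1%N | by exists 2%N | by exists 3%N
          | by exists 4%N | exfalso; lra] ].

Lemma frw : first_return_word th m (nth [::] Ls (windex g y z)).
Proof.
have [t0 t12 t1_2 tc0] := tfacts.
have n1 : tb1 g y != tc g z.
  by apply/eqP => e; apply: (@cross_ne Lb Lc (tb1 g y)) => //; [exact: cB1 | rewrite e; exact: cC].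
have n2 : tb2 g y != tc g z.
  by apply/eqP => e; apply: (@cross_ne Lb Lc (tb2 g y)) => //; [exact: cB2 | rewrite e; exact: cC].
rewrite /windex.
case: ifP => B; [case: ifP => C; [case: ifP => D1; [case: ifP => D2|]|]
                | case: ifP => C; [case: ifP => D1|]];
  split => //=.
- solve_wp [:: 0; tb1 g y; tc g z; tb2 g y; 2].
- have D2' : tb2 g y < tc g z by rewrite lt_neqAle n2 (ltFE D2).
  solve_wp [:: 0; tb1 g y; tb2 g y; tc g z; 2].
- have D1' : tc g z < tb1 g y by rewrite lt_neqAle eq_sym n1 (ltFE D1).
  solve_wp [:: 0; tc g z; tb1 g y; tb2 g y; 2].
- have C' := ltFE C.
  solve_wp [:: 0; tb1 g y; tb2 g y; 2].
- have B' := ltFE B.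
  solve_wp [:: 0; tb1 g y; tc g z; 2].
- have B' := ltFE B.
  have D1' : tc g z < tb1 g y by rewrite lt_neqAle eq_sym n1 (ltFE D1).
  solve_wp [:: 0; tc g z; tb1 g y; 2].
- have B' := ltFE B; have C' := ltFE C.
  solve_wp [:: 0; tb1 g y; 2].
Qed.

End Orbit.

End Main.

Lemma golden_facts (R : realType) :
  let g := golden R in let r := 1 / golden R in
  [/\ r * g = 1, g = 1 + r, 3/5 < r < 5/8 & 1 / golden R ^+ 2 = 1 - r].
Proof.
move=> g r.
set s := Num.sqrt (5 : R).
have s2 : s ^+ 2 = 5 by rewrite sqr_sqrtr.
have s0 : 0 <= s by rewrite sqrtr_ge0.
have sb1 : 11/5 < s by nra.
have sb2 : s < 9/4 by nra.
have gE : g = (1 + s) / 2 by [].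
have gg : g * g = g + 1 by rewrite gE; lra.
have g0 : g != 0 by apply/eqP => e; move: gg; rewrite e; lra.
have rg : r * g = 1 by rewrite /r mul1r mulVf.
have gr : g = 1 + r.
  transitivity (g * (r * g)); first by rewrite rg mulr1.
  rewrite mulrC -mulrA gg mulrDr mulr1 rg; lra.
split => //.
- by apply/andP; split; lra.
- rewrite -/g (_ : 1 / g ^+ 2 = r * r); last by rewrite /r mul1r -exprVn expr2 !mul1r.
  transitivity (r * (g - 1)); first by rewrite gr; congr (_ * _); lra.
  rewrite mulrDr rg; lra.
Qed.

Theorem lemma4 (R : realType) :
  exists P : 'I_7 -> R * R * R -> Prop,
    is_partition (@face_X0 R) P /\
    (forall (i : 'I_7) (m : R * R * R), P i m ->
       well_defined_orbit (theta0 R) m ->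
       first_return_word (theta0 R) m (Phi i)).
Proof.
have [rg gr rb q] := golden_facts R.
exists (fun i p => face_X0 p /\ windex (golden R) p.1.2 p.2 = i).
split.
  split.
  - move=> p; split => [Hf|[i [Hf _]]] //.
    by exists (Ordinal (windex_lt (golden R) p.1.2 p.2)); split.
  - by move=> i j p [_ e1] [_ e2]; apply: val_inj; rewrite /= -e1 -e2.
  - move=> i; have [y [z [hy [hz e]]]] := nonempty rg gr rb (ltn_ord i).
    by exists ((0, y), z); split => //.
move=> i [[x y] z] [[/= x0 [hy hz]] e] wd; subst x.
have th : theta0 R = (1 / 2, 1 / golden R, 1 - 1 / golden R) by rewrite /theta0 q.
rewrite th in wd *.
rewrite /Phi -e.
exact: (frw rg gr rb wd hy hz).
Qed.
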